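(* Let $\mathbb{K}\in\{\mathbb{R},\mathbb{C}\}$, let $\mathbf{R}_U\in\mathbb{K}^{n\times n}$ be self-adjoint positive definite, and equip $U:=\mathbb{K}^n$ with $\langle \mathbf{x},\mathbf{y}\rangle_U:=\langle \mathbf{R}_U\mathbf{x},\mathbf{y}\rangle$. Fix $\mu$, $\mathbf{A}(\mu)\in\mathbb{K}^{n\times n}$, $\mathbf{u}(\mu)\in U$, and a subspace $U_r\subseteq U$ of dimension $r$ with a basis matrix $\mathbf{U}_r\in\mathbb{K}^{n\times r}$ (columns forming a basis of $U_r$). Define $\|\mathbf{y}\|_{U_r'}:=\max_{\mathbf{w}\in U_r\setminus\{\mathbf{0}\}}|\langle\mathbf{y},\mathbf{w}\rangle|/\|\mathbf{w}\|_U$, $\alpha_r(\mu):=\min_{\mathbf{x}\in U_r\setminus\{\mathbf{0}\}}\|\mathbf{A}(\mu)\mathbf{x}\|_{U_r'}/\|\mathbf{x}\|_U$ and $\beta_r(\mu):=\max_{\mathbf{x}\in(\mathrm{span}\{\mathbf{u}(\mu)\}+U_r)\setminus\{\mathbf{0}\}}\|\mathbf{A}(\mu)\mathbf{x}\|_{U_r'}/\|\mathbf{x}\|_U$. If the columns of $\mathbf{U}_r$ are orthonormal with respect to $\langle\cdot,\cdot\rangle_U$, then the condition number of $\mathbf{A}_r(\mu):=\mathbf{U}_r^{\mathrm{H}}\mathbf{A}(\mu)\mathbf{U}_r\in\mathbb{K}^{r\times r}$ is bounded by $\beta_r(\mu)/\alpha_r(\mu)$.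
   Context: $\langle\mathbf{x},\mathbf{y}\rangle=\mathbf{x}^{\mathrm{H}}\mathbf{y}$ is the canonical inner product; $\|\cdot\|_U$ is the norm induced by $\langle\cdot,\cdot\rangle_U$. The condition number of a square matrix is the ratio of its largest to smallest singular value (with respect to the Euclidean norm). *)

(* Defs.v *)
(* R : realType (mathcomp-analysis reals), scalars in the
   complex field R[i] (mathcomp-real-closed); K = R is modelled by a flag
   restricting all data to real entries. *)
From HB Require Import structures.
From mathcomp Require Import all_boot all_order all_algebra.
From mathcomp Require Import classical_sets reals.
From mathcomp Require Import complex.
Set Implicit Arguments. Unset Strict Implicit. Unset Printing Implicit Defensive.
Import Order.TTheory GRing.Theory Num.Theory.
Local Open Scope ring_scope.
Local Open Scope classical_set_scope.

Section Defs.
Variable R : realType.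
Local Notation C := R[i].

Definition Kscal (Kreal : bool) (z : C) : bool := Kreal ==> (complex.Im z == 0).
Definition Kmx (Kreal : bool) m k (M : 'M[C]_(m, k)) : bool :=
  [forall i, forall j, Kscal Kreal (M i j)].

Definition hadj m k (M : 'M[C]_(m, k)) : 'M[C]_(k, m) :=
  (map_mx (fun z => conjc z) M)^T.

Definition ip n (x y : 'cV[C]_n) : C := (hadj x *m y) 0 0.
Definition ipU n (RU : 'M[C]_n) (x y : 'cV[C]_n) : C := ip (RU *m x) y.
Definition normU n (RU : 'M[C]_n) (x : 'cV[C]_n) : R :=
  Num.sqrt (complex.Re (ipU RU x x)).
Definition cabs (z : C) : R := Normc.normc z.

Definition in_Ur (Kreal : bool) n r (Ur : 'M[C]_(n, r)) (w : 'cV[C]_n) : Prop :=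
  exists c : 'cV[C]_r, Kmx Kreal c /\ w = Ur *m c.
Definition in_uUr (Kreal : bool) n r (u : 'cV[C]_n) (Ur : 'M[C]_(n, r))
  (x : 'cV[C]_n) : Prop :=
  exists (t : C) (c : 'cV[C]_r), Kscal Kreal t /\ Kmx Kreal c /\ x = t *: u + Ur *m c.

Definition dualnorm (Kreal : bool) n r (RU : 'M[C]_n) (Ur : 'M[C]_(n, r))
  (y : 'cV[C]_n) : R :=
  sup [set cabs (ip y w) / normU RU w | w in [set w | in_Ur Kreal Ur w /\ w != 0]].

Definition alpha_r (Kreal : bool) n r (RU A : 'M[C]_n) (Ur : 'M[C]_(n, r)) : R :=
  inf [set dualnorm Kreal RU Ur (A *m x) / normU RU x
      | x in [set x | in_Ur Kreal Ur x /\ x != 0]].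

Definition beta_r (Kreal : bool) n r (RU A : 'M[C]_n) (u : 'cV[C]_n)
  (Ur : 'M[C]_(n, r)) : R :=
  sup [set dualnorm Kreal RU Ur (A *m x) / normU RU x
      | x in [set x | in_uUr Kreal u Ur x /\ x != 0]].

Definition singvals r (M : 'M[C]_r) : set R :=
  [set s | 0 <= s /\ eigenvalue (hadj M *m M) (real_complex R (s ^+ 2))].
Definition cond_number r (M : 'M[C]_r) : R :=
  sup (singvals M) / inf (singvals M).

End Defs.

(* Main.v *)
Require Import Defs.
From HB Require Import structures.
From mathcomp Require Import all_boot all_order all_algebra.
From mathcomp Require Import classical_sets reals.
From mathcomp Require Import complex.
From mathcomp Require Import sesquilinear spectral.
From mathcomp Require Import ring lra.
Import Order.TTheory GRing.Theory Num.Theory.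
Set Implicit Arguments. Unset Strict Implicit. Unset Printing Implicit Defensive.
Local Open Scope ring_scope. Local Open Scope complex_scope. Local Open Scope classical_set_scope.

Section Aux.
Variable R : realType.
Local Notation C := R[i].

Lemma hadjM m k p (A : 'M[C]_(m,k)) (B : 'M[C]_(k,p)) :
  hadj (A *m B) = hadj B *m hadj A.
Proof.
apply/matrixP => i j; rewrite !mxE rmorph_sum; apply: eq_bigr => l _.
by rewrite !mxE rmorphM mulrC.
Qed.

Lemma hadjK m k (A : 'M[C]_(m,k)) : hadj (hadj A) = A.
Proof. by apply/matrixP => i j; rewrite !mxE conjcK. Qed.

Lemma hadjD m k (A B : 'M[C]_(m,k)) : hadj (A + B) = hadj A + hadj B.
Proof. by apply/matrixP => i j; rewrite !mxE rmorphD. Qed.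

Lemma hadjZ m k a (A : 'M[C]_(m,k)) : hadj (a *: A) = conjc a *: hadj A.
Proof. by apply/matrixP => i j; rewrite !mxE rmorphM. Qed.

Lemma hadjN m k (A : 'M[C]_(m,k)) : hadj (- A) = - hadj A.
Proof. by apply/matrixP => i j; rewrite !mxE rmorphN. Qed.

Definition nn k (c : 'cV[C]_k) : C := ip c c.
Definition vn k (c : 'cV[C]_k) : R := Num.sqrt (complex.Re (nn c)).

Lemma ip_dot k (x y : 'cV[C]_k) : ip x y = dotmx (y^T) (x^T).
Proof.
rewrite dotmxE /ip !mxE; apply: eq_bigr => l _; rewrite !mxE mulrC.
by [].
Qed.

Lemma nn_ge0 k (c : 'cV[C]_k) : 0 <= nn c.
Proof. by rewrite /nn ip_dot dnorm_ge0. Qed.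

Lemma nn_eq0 k (c : 'cV[C]_k) : (nn c == 0) = (c == 0).
Proof.
rewrite /nn ip_dot dnorm_eq0; apply/eqP/eqP => [h|->]; last by rewrite trmx0.
by rewrite -[c]trmxK h trmx0.
Qed.

Lemma cplx_ge0E (z : C) : 0 <= z -> z = (complex.Re z)%:C.
Proof. by case: z => a b; rewrite lecE /= => /andP[/eqP-> _]. Qed.

Lemma nnE k (c : 'cV[C]_k) : nn c = ((vn c) ^+ 2)%:C.
Proof.
rewrite /vn sqr_sqrtr; first exact/cplx_ge0E/nn_ge0.
by have := nn_ge0 c; rewrite lecE /= => /andP[_].
Qed.

Lemma vn_ge0 k (c : 'cV[C]_k) : 0 <= vn c.
Proof. exact: sqrtr_ge0. Qed.

Lemma vn_eq0 k (c : 'cV[C]_k) : (vn c == 0) = (c == 0).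
Proof.
rewrite -nn_eq0 nnE; apply/eqP/eqP => [->|h]; first by rewrite expr0n.
by move/complexI: h => /eqP; rewrite sqrf_eq0 => /eqP.
Qed.

Lemma sqrtC_vn k (c : 'cV[C]_k) : sqrtC (nn c) = (vn c)%:C.
Proof. by rewrite nnE rmorphXn sqrCK // ler0c vn_ge0. Qed.

Lemma CS k (z c : 'cV[C]_k) : cabs (ip z c) <= vn z * vn c.
Proof.
rewrite -lecR rmorphM /= -!sqrtC_vn /nn ip_dot !ip_dot.
have := (CauchySchwarz_sqrt (@dotmx C k) c^T z^T).1.
by rewrite mulrC.
Qed.


Lemma ipDl k (x y z : 'cV[C]_k) : ip (x + y) z = ip x z + ip y z.
Proof. by rewrite /ip hadjD mulmxDl mxE. Qed.
Lemma ipDr k (x y z : 'cV[C]_k) : ip z (x + y) = ip z x + ip z y.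
Proof. by rewrite /ip mulmxDr mxE. Qed.
Lemma ipZl k a (x z : 'cV[C]_k) : ip (a *: x) z = conjc a * ip x z.
Proof. by rewrite /ip hadjZ -scalemxAl mxE. Qed.
Lemma ipZr k a (x z : 'cV[C]_k) : ip z (a *: x) = a * ip z x.
Proof. by rewrite /ip -scalemxAr mxE. Qed.
Lemma ipNl k (x z : 'cV[C]_k) : ip (- x) z = - ip x z.
Proof. by rewrite -scaleN1r ipZl rmorphN rmorph1 mulN1r. Qed.
Lemma ipNr k (x z : 'cV[C]_k) : ip z (- x) = - ip z x.
Proof. by rewrite -scaleN1r ipZr mulN1r. Qed.
Lemma ip0l k (z : 'cV[C]_k) : ip 0 z = 0.
Proof. by rewrite /ip (_ : hadj 0 = 0) ?mul0mx ?mxE //; apply/matrixP=> i j; rewrite !mxE conjc0. Qed.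
Lemma ip0r k (z : 'cV[C]_k) : ip z 0 = 0.
Proof. by rewrite /ip mulmx0 mxE. Qed.

Lemma vnE k (c : 'cV[C]_k) : (vn c ^+ 2)%:C = nn c.
Proof. by rewrite nnE. Qed.

Lemma vn_parallel k (a b : 'cV[C]_k) :
  vn (a + b) ^+ 2 + vn (a - b) ^+ 2 = 2 * vn a ^+ 2 + 2 * vn b ^+ 2.
Proof.
rewrite !mulr_natl; apply: complexI; rewrite !rmorphD /= !vnE /nn.
rewrite !ipDl !ipDr !ipNl !ipNr /=.
ring.
Qed.

Lemma vn_add2 k (a b : 'cV[C]_k) :
  vn (a + b) ^+ 2 <= 2 * vn a ^+ 2 + 2 * vn b ^+ 2.
Proof.
rewrite -vn_parallel lerDl; exact: sqr_ge0.
Qed.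

Lemma cabs_ge0 (z : C) : 0 <= cabs z.
Proof. by rewrite -ler0c; have := normr_ge0 z. Qed.

Lemma cabs2 (t : C) : ((cabs t) ^+ 2)%:C = conjc t * t.
Proof. by rewrite rmorphXn /= (_ : (cabs t)%:C = `|t|) // normCKC. Qed.

Lemma vnZ k t (f : 'cV[C]_k) : vn (t *: f) = cabs t * vn f.
Proof.
have h : vn (t *: f) ^+ 2 = (cabs t * vn f) ^+ 2.
  apply: complexI; rewrite vnE /nn ipZl ipZr exprMn rmorphM /= cabs2 vnE.
  by rewrite mulrA.
move/eqP: h; rewrite eqrXn2 // ?vn_ge0 //; first by move/eqP.
by rewrite mulr_ge0 ?cabs_ge0 ?vn_ge0.
Qed.

Lemma divr_le (a b B : R) : 0 <= b -> 0 <= B -> a <= B * b -> a / b <= B.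
Proof.
rewrite le_eqVlt => /orP[/eqP <-|bp] B0 h; first by rewrite invr0 mulr0.
by rewrite ler_pdivrMr.
Qed.

Lemma sqr_le_sqrt (a B : R) : 0 <= a -> 0 <= B -> a ^+ 2 <= B -> a <= Num.sqrt B.
Proof.
move=> a0 B0 h; rewrite -(ler_sqr (x:=a)) ?nnegrE ?sqrtr_ge0 //.
by rewrite sqr_sqrtr.
Qed.

Lemma KscalE (Kreal : bool) (z : C) : Kscal Kreal z = (Kreal ==> (z \is Num.real)).
Proof. by case: z => a b; rewrite /Kscal complex_real. Qed.

Lemma KmxP (Kreal : bool) m k (M : 'M[C]_(m, k)) :
  reflect (Kreal -> forall i j, M i j \is Num.real) (Kmx Kreal M).
Proof.
apply: (iffP forallP) => [h Kr i j|h i]; last first.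
  by apply/forallP => j; rewrite KscalE; apply/implyP => Kr; apply: h.
by have /forallP/(_ j) := h i; rewrite KscalE Kr.
Qed.

Lemma Kmx_mul (Kreal : bool) m k p (A : 'M[C]_(m, k)) (B : 'M[C]_(k, p)) :
  Kmx Kreal A -> Kmx Kreal B -> Kmx Kreal (A *m B).
Proof.
move=> /KmxP hA /KmxP hB; apply/KmxP => Kr i j; rewrite mxE.
by apply: rpred_sum => l _; rewrite rpredM ?hA ?hB.
Qed.

Lemma Kmx_add (Kreal : bool) m k (A B : 'M[C]_(m, k)) :
  Kmx Kreal A -> Kmx Kreal B -> Kmx Kreal (A + B).
Proof.
move=> /KmxP hA /KmxP hB; apply/KmxP => Kr i j; rewrite mxE.
by rewrite rpredD ?hA ?hB.
Qed.

Lemma Kmx_opp (Kreal : bool) m k (A : 'M[C]_(m, k)) :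
  Kmx Kreal A -> Kmx Kreal (- A).
Proof.
move=> /KmxP hA; apply/KmxP => Kr i j; rewrite mxE.
by rewrite rpredN ?hA.
Qed.

Lemma Kmx_scale (Kreal : bool) m k t (A : 'M[C]_(m, k)) :
  Kscal Kreal t -> Kmx Kreal A -> Kmx Kreal (t *: A).
Proof.
rewrite KscalE => /implyP ht /KmxP hA; apply/KmxP => Kr i j; rewrite mxE.
by rewrite rpredM ?hA ?ht.
Qed.

Lemma Kmx_hadj (Kreal : bool) m k (A : 'M[C]_(m, k)) :
  Kmx Kreal A -> Kmx Kreal (hadj A).
Proof.
move=> /KmxP hA; apply/KmxP => Kr i j; rewrite !mxE.
have := hA Kr j i; rewrite !CrealE => /eqP h.
by rewrite -[conjc _]/(Num.conj _) conjCK h.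
Qed.

Lemma Kmx0 (Kreal : bool) m k : Kmx Kreal (0 : 'M[C]_(m, k)).
Proof. by apply/KmxP => Kr i j; rewrite mxE rpred0. Qed.

Lemma vn2_sum k (z : 'cV[C]_k) : vn z ^+ 2 = \sum_i cabs (z i 0) ^+ 2.
Proof.
apply: complexI; rewrite vnE /nn /ip mxE rmorph_sum; apply: eq_bigr => i _.
by rewrite !mxE; symmetry; exact: cabs2.
Qed.

Lemma opbound p q (B : 'M[C]_(p, q)) :
  exists K, 0 < K /\ forall y, vn (B *m y) <= K * vn y.
Proof.
pose K2 := \sum_i vn (hadj (row i B)) ^+ 2.
have K20 : 0 <= K2 by apply: sumr_ge0 => i _; exact: sqr_ge0.
have h y : vn (B *m y) ^+ 2 <= K2 * vn y ^+ 2.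
  rewrite vn2_sum mulr_suml; apply: ler_sum => i _.
  have -> : (B *m y) i 0 = ip (hadj (row i B)) y.
    by rewrite /ip hadjK !mxE; apply: eq_bigr => j _; rewrite !mxE.
  rewrite -exprMn ler_sqr ?nnegrE ?cabs_ge0 ?mulr_ge0 ?vn_ge0 //.
  exact: CS.
exists (Num.sqrt K2 + 1); split; first by have := sqrtr_ge0 K2; lra.
move=> y; apply: (@le_trans _ _ (Num.sqrt K2 * vn y)).
  rewrite -[vn y in X in _ <= X]ger0_norm ?vn_ge0 // -sqrtr_sqr -sqrtrM //.
  apply: sqr_le_sqrt; rewrite ?vn_ge0 ?mulr_ge0 ?sqr_ge0 //.
  exact: vn_ge0.
by have := vn_ge0 y; have := sqrtr_ge0 K2; nra.
by have := vn_ge0 y; have := sqrtr_ge0 K2; nra.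
Qed.

Lemma Re_add (x y : C) : complex.Re (x + y) = complex.Re x + complex.Re y.
Proof. by case: x; case: y. Qed.

Lemma Re_sum (I : finType) (F : I -> C) :
  complex.Re (\sum_i F i) = \sum_i complex.Re (F i).
Proof.
elim/big_rec2: _ => //= i y1 y2 _ <-; exact: Re_add.
Qed.

Lemma Im_sum (I : finType) (F : I -> C) :
  complex.Im (\sum_i F i) = \sum_i complex.Im (F i).
Proof.
have Im_add (x y : C) : complex.Im (x + y) = complex.Im x + complex.Im y.
  by case: x; case: y.
elim/big_rec2: _ => //= i y1 y2 _ <-; exact: Im_add.
Qed.

Lemma mulRe (x z : C) : x \is Num.real ->
  complex.Re (x * z) = complex.Re x * complex.Re z /\
  complex.Im (x * z) = complex.Re x * complex.Im z.
Proof.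
case: x => a b; rewrite complex_real => /eqP ->; case: z => c d /=.
by split; ring.
Qed.

Lemma creal (x : R) : x%:C \is Num.real.
Proof. by rewrite complex_real. Qed.

Lemma real_eig k (N : 'M[C]_k) (lam : R) (v : 'cV[C]_k) :
  (forall i j, N i j \is Num.real) -> v != 0 -> N *m v = lam%:C *: v ->
  exists w : 'cV[C]_k, (forall i j, w i j \is Num.real) /\ w != 0 /\
    N *m w = lam%:C *: w.
Proof.
move=> NR vn0 h.
pose a := map_mx (fun z => (complex.Re z)%:C) v.
pose b := map_mx (fun z => (complex.Im z)%:C) v.
have ha : N *m a = lam%:C *: a.
  apply/matrixP => i j; have := congr1 (fun M : 'M[C]_(k,1) => complex.Re (M i j)) h.
  rewrite !mxE /= Re_sum (mulRe _ (creal lam)).1 /= => e.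
  transitivity ((\sum_l complex.Re (N i l) * complex.Re (v l j))%:C).
    rewrite rmorph_sum; apply: eq_bigr => l _; rewrite !mxE rmorphM /=.
    by congr (_ * _); symmetry; exact: RRe_real.
  rewrite (eq_bigr (fun l => complex.Re (N i l * v l j))); last first.
    by move=> l _; rewrite (mulRe _ (NR i l)).1.
  by rewrite e rmorphM.
have hb : N *m b = lam%:C *: b.
  apply/matrixP => i j; have := congr1 (fun M : 'M[C]_(k,1) => complex.Im (M i j)) h.
  rewrite !mxE /= Im_sum (mulRe _ (creal lam)).2 /= => e.
  transitivity ((\sum_l complex.Re (N i l) * complex.Im (v l j))%:C).
    rewrite rmorph_sum; apply: eq_bigr => l _; rewrite !mxE rmorphM /=.
    by congr (_ * _); symmetry; exact: RRe_real.
  rewrite (eq_bigr (fun l => complex.Im (N i l * v l j))); last first.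
    by move=> l _; rewrite (mulRe _ (NR i l)).2.
  by rewrite e rmorphM.
have [a0|an0] := eqVneq a 0; last first.
  by exists a; split=> // i j; rewrite mxE creal.
have [b0|bn0] := eqVneq b 0; last first.
  by exists b; split=> // i j; rewrite mxE creal.
case/negP: vn0; apply/eqP/matrixP => i j; rewrite [v i j]complexE.
have := congr1 (fun M : 'M[C]_(k,1) => M i j) a0; have := congr1 (fun M : 'M[C]_(k,1) => M i j) b0.
by rewrite !mxE => -> ->; rewrite mulr0 addr0.
Qed.

Lemma eig_col k (N : 'M[C]_k) lam : eigenvalue N lam ->
  exists2 v : 'cV[C]_k, v != 0 & hadj N *m v = conjc lam *: v.
Proof.
move/eigenvalueP => [w hw wn0]; exists (hadj w).
  by apply: contra wn0 => /eqP h; rewrite -[w]hadjK h; apply/eqP/matrixP => i j; rewrite !mxE conjc0.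
by rewrite -hadjM hw hadjZ.
Qed.

Lemma eig_norm k (M : 'M[C]_k) (lam : C) v :
  (hadj M *m M) *m v = lam *: v -> nn (M *m v) = lam * nn v.
Proof.
move=> h; rewrite /nn /ip hadjM -mulmxA (mulmxA (hadj M)) h.
by rewrite -scalemxAr mxE.
Qed.

Lemma sup_ge0 (S : set R) : (forall x, S x -> 0 <= x) -> has_ubound S -> 0 <= sup S.
Proof.
move=> h hub; have [->|/set0P [x Sx]] := eqVneq S set0; first by rewrite sup0.
exact: le_trans (h x Sx) (ub_le_sup hub Sx).
Qed.

Lemma Kmx_false m k (M : 'M[C]_(m, k)) : Kmx false M.
Proof. by apply/KmxP. Qed.

End Aux.

Section Main.
Variables (R : realType) (Kreal : bool) (n r : nat)
  (RU A : 'M[R[i]]_n) (u : 'cV[R[i]]_n) (Ur : 'M[R[i]]_(n, r)).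
Hypotheses (hr : (0 < r)%N) (hRU_K : Kmx Kreal RU) (hRU_sa : hadj RU = RU)
  (hRU_pd : forall x : 'cV[R[i]]_n, Kmx Kreal x -> x != 0 -> 0 < ipU RU x x)
  (hA_K : Kmx Kreal A) (hu_K : Kmx Kreal u) (hUr_K : Kmx Kreal Ur)
  (hUr_basis : forall c : 'cV[R[i]]_r, Kmx Kreal c -> Ur *m c = 0 -> c = 0)
  (hUr_orth : hadj Ur *m RU *m Ur = 1%:M).
Local Notation C := R[i].
Local Notation M := (hadj Ur *m A *m Ur).

Lemma ipU_Ur (c : 'cV[C]_r) : ipU RU (Ur *m c) (Ur *m c) = nn c.
Proof.
rewrite /ipU /nn /ip !hadjM hRU_sa.
by rewrite mulmxA -!mulmxA (mulmxA (hadj Ur)) (mulmxA (hadj Ur *m RU)) hUr_orth mul1mx.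
Qed.

Lemma normU_Ur (c : 'cV[C]_r) : normU RU (Ur *m c) = vn c.
Proof. by rewrite /normU ipU_Ur. Qed.

Lemma ip_Ur (y : 'cV[C]_n) (c : 'cV[C]_r) : ip y (Ur *m c) = ip (hadj Ur *m y) c.
Proof. by rewrite /ip hadjM hadjK mulmxA. Qed.

Lemma Ur_nz (c : 'cV[C]_r) : Kmx Kreal c -> c != 0 -> Ur *m c != 0.
Proof. by move=> Kc; apply: contra => /eqP /(hUr_basis Kc) ->. Qed.

Lemma dualnorm_ub (y : 'cV[C]_n) :
  ubound [set cabs (ip y w) / normU RU w | w in [set w | in_Ur Kreal Ur w /\ w != 0]]
    (vn (hadj Ur *m y)).
Proof.
move=> v [w [[c [Kc ->]] wn0] <-]; rewrite ip_Ur normU_Ur.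
by apply: divr_le; rewrite ?vn_ge0 //; exact: CS.
Qed.

Lemma dualnorm_le (y : 'cV[C]_n) : dualnorm Kreal RU Ur y <= vn (hadj Ur *m y).
Proof.
rewrite /dualnorm; set S := [set _ | _ in _].
have [->|/set0P S0] := eqVneq S set0; first by rewrite sup0 vn_ge0.
exact: ge_sup S0 (@dualnorm_ub y).
Qed.

Lemma dualnorm_eq (y : 'cV[C]_n) : Kmx Kreal y -> dualnorm Kreal RU Ur y = vn (hadj Ur *m y).
Proof.
move=> Ky; apply/le_anti; rewrite dualnorm_le /=.
rewrite /dualnorm; set S := [set _ | _ in _].
have hub : has_ubound S by exists (vn (hadj Ur *m y)); exact: dualnorm_ub.
set z := hadj Ur *m y.
have Kz : Kmx Kreal z by apply: Kmx_mul => //; apply: Kmx_hadj.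
have [z0|zn0] := eqVneq z 0.
  rewrite z0 (eqP (_ : vn 0 == 0)) ?vn_eq0 //; apply: sup_ge0 => // x [w _ <-].
  by rewrite divr_ge0 ?cabs_ge0 ?sqrtr_ge0.
apply: (ub_le_sup hub); exists (Ur *m z); first by split; [exists z|exact: Ur_nz].
rewrite ip_Ur normU_Ur -/z.
have -> : cabs (ip z z) = vn z ^+ 2.
  apply: complexI; rewrite vnE.
  have e : `|ip z z| = ip z z := ger0_norm (nn_ge0 z).
  by rewrite /nn -{2}e.
by rewrite expr2 mulfK // vn_eq0.
Qed.

Lemma dualnorm_ge0 (y : 'cV[C]_n) : 0 <= dualnorm Kreal RU Ur y.
Proof.
rewrite /dualnorm; apply: sup_ge0; last by exists (vn (hadj Ur *m y)); exact: dualnorm_ub.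
by move=> x [w _ <-]; rewrite divr_ge0 ?cabs_ge0 ?sqrtr_ge0.
Qed.

Lemma KM : Kmx Kreal M.
Proof. by apply: Kmx_mul => //; apply: Kmx_mul => //; apply: Kmx_hadj. Qed.

Lemma val_Ur (c : 'cV[C]_r) : Kmx Kreal c ->
  dualnorm Kreal RU Ur (A *m (Ur *m c)) / normU RU (Ur *m c) = vn (M *m c) / vn c.
Proof.
move=> Kc; rewrite normU_Ur dualnorm_eq ?mulmxA //.
by apply: Kmx_mul => //; apply: Kmx_mul.
Qed.

Lemma alpha_le (c : 'cV[C]_r) : Kmx Kreal c -> c != 0 -> alpha_r Kreal RU A Ur <= vn (M *m c) / vn c.
Proof.
move=> Kc cn0; rewrite /alpha_r; apply: ge_inf.
  by exists 0 => v [x _ <-]; rewrite divr_ge0 ?dualnorm_ge0 ?sqrtr_ge0.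
exists (Ur *m c); first by split; [exists c|exact: Ur_nz].
exact: val_Ur.
Qed.

Lemma alpha_ge0 : 0 <= alpha_r Kreal RU A Ur.
Proof.
rewrite /alpha_r; set S := [set _ | _ in _].
have [->|/set0P S0] := eqVneq S set0; first by rewrite inf0.
by apply: lb_le_inf S0 _ => v [x _ <-]; rewrite divr_ge0 ?dualnorm_ge0 ?sqrtr_ge0.
Qed.

Lemma alpha_ge k : (exists c : 'cV[C]_r, Kmx Kreal c /\ c != 0) ->
  (forall c : 'cV[C]_r, Kmx Kreal c -> c != 0 -> k <= vn (M *m c) / vn c) ->
  k <= alpha_r Kreal RU A Ur.
Proof.
move=> [c0 [Kc0 c0n0]] h; rewrite /alpha_r; apply: lb_le_inf.
  by exists (vn (M *m c0) / vn c0); exists (Ur *m c0); [split; [exists c0|exact: Ur_nz]|exact: val_Ur].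
move=> v [x [[c [Kc ->]] xn0] <-]; rewrite val_Ur //; apply: h => //.
by apply: contra xn0 => /eqP ->; rewrite mulmx0.
Qed.

Lemma Kscal0 : Kscal Kreal (0 : C).
Proof. by rewrite KscalE rpred0 implybT. Qed.

Lemma ip_RUUr_l (a : 'cV[C]_r) (b : 'cV[C]_n) :
  ip (RU *m (Ur *m a)) b = ip a (hadj Ur *m RU *m b).
Proof. by rewrite /ip !hadjM hRU_sa !mulmxA. Qed.

Lemma ip_RUUr_r (a : 'cV[C]_r) (b : 'cV[C]_n) :
  ip (RU *m b) (Ur *m a) = ip (hadj Ur *m RU *m b) a.
Proof. by rewrite /ip !hadjM hRU_sa hadjK !mulmxA. Qed.

Lemma beta_ub : has_ubound [set dualnorm Kreal RU Ur (A *m x) / normU RU x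
      | x in [set x | in_uUr Kreal u Ur x /\ x != 0]].
Proof.
pose g := hadj Ur *m RU *m u; pose e := u - Ur *m g.
pose f := hadj Ur *m (A *m e).
pose dl := complex.Re (ipU RU e e).
have Ke : Kmx Kreal e.
  apply: Kmx_add => //; apply: Kmx_opp; apply: Kmx_mul => //.
  by apply: Kmx_mul => //; apply: Kmx_mul => //; apply: Kmx_hadj.
have orth : hadj Ur *m RU *m e = 0.
  by rewrite /e mulmxBr mulmxA hUr_orth mul1mx subrr.
have dlpos : e != 0 -> 0 < dl.
  by move=> en0; have := hRU_pd Ke en0; rewrite ltcE => /andP[_].
have dl0 : 0 <= dl.
  have [e0|en0] := eqVneq e 0; last exact/ltW/dlpos.
  by rewrite /dl /ipU e0 mulmx0 ip0r.
have fdl : vn f ^+ 2 = vn f ^+ 2 / dl * dl.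
  have [e0|en0] := eqVneq e 0; last by rewrite divfK // gt_eqF // dlpos.
  have -> : f = 0 by rewrite /f e0 !mulmx0.
  by rewrite (eqP (_ : vn 0 == 0)) ?vn_eq0 // expr0n /= !mul0r.
have [KM [KMp hKM]] := opbound M.
exists (Num.sqrt (2 * KM ^+ 2 + 2 * (vn f ^+ 2 / dl))).
move=> v [x [[t [c [Kt [Kc ->]]]] _] <-].
pose d := t *: g + c.
have xe : t *: u + Ur *m c = Ur *m d + t *: e.
  by rewrite /d /e mulmxDr -scalemxAr scalerBr [RHS]addrC -[RHS]addrA addKr.
rewrite xe; clearbody d.
have hip : complex.Re (ipU RU (Ur *m d + t *: e) (Ur *m d + t *: e)) =
    vn d ^+ 2 + cabs t ^+ 2 * dl.
  rewrite /ipU mulmxDr !ipDl !ipDr.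
  rewrite -[ip (RU *m (Ur *m d)) (Ur *m d)]/(ipU RU (Ur *m d) (Ur *m d)) ipU_Ur.
  rewrite ipZr ip_RUUr_l orth ip0r mulr0 addr0.
  rewrite -scalemxAr ipZl ip_RUUr_r orth ip0l mulr0 add0r ipZl ipZr mulrA.
  have -> : conjc t * t = ((cabs t) ^+ 2)%:C by rewrite cabs2.
  rewrite Re_add nnE (mulRe _ (creal _)).1 /=.
  by rewrite /dl /ipU.
have hAx : hadj Ur *m (A *m (Ur *m d + t *: e)) = M *m d + t *: f.
  by rewrite /f (mulmxDr A) (mulmxDr (hadj Ur)) -!scalemxAr !mulmxA.
apply: divr_le; [exact: sqrtr_ge0 | exact: sqrtr_ge0 | ].
apply: le_trans (dualnorm_le _) _.
have Q0 : 0 <= vn f ^+ 2 / dl by rewrite divr_ge0 ?sqr_ge0.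
have N0 : 0 <= vn d ^+ 2 + cabs t ^+ 2 * dl.
  by apply: addr_ge0; [exact: sqr_ge0 | apply: mulr_ge0; [exact: sqr_ge0 | exact: dl0]].
have B0 : 0 <= 2 * KM ^+ 2 + 2 * (vn f ^+ 2 / dl).
  by apply: addr_ge0; apply: mulr_ge0 => //; exact: sqr_ge0.
rewrite hAx /normU hip -sqrtrM //.
apply: sqr_le_sqrt; [exact: vn_ge0 | exact: mulr_ge0 | ].
have h1 := vn_add2 (M *m d) (t *: f); rewrite vnZ in h1.
have h2 : vn (M *m d) ^+ 2 <= KM ^+ 2 * vn d ^+ 2.
  by rewrite -exprMn ler_sqr ?nnegrE ?vn_ge0 ?mulr_ge0 ?vn_ge0 ?(ltW KMp).
set Q := vn f ^+ 2 / dl in Q0 fdl *.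
set X := vn (M *m d + t *: f) ^+ 2 in h1 *.
set Y := vn (M *m d) ^+ 2 in h1 h2 *.
have p1 : 0 <= KM ^+ 2 * (cabs t ^+ 2 * dl).
  by apply: mulr_ge0; [exact: sqr_ge0| exact: mulr_ge0 (sqr_ge0 _) dl0].
have p2 : 0 <= Q * vn d ^+ 2 by apply: mulr_ge0 => //; exact: sqr_ge0.
have p3 : (cabs t * vn f) ^+ 2 = cabs t ^+ 2 * Q * dl by rewrite exprMn fdl !mulrA.
set T := cabs t ^+ 2 in p1 p3 *.
set D := vn d ^+ 2 in p2 h2 *.
rewrite p3 in h1.
nra.
Qed.

Lemma beta_ge (c : 'cV[C]_r) : Kmx Kreal c -> c != 0 ->
  vn (M *m c) / vn c <= beta_r Kreal RU A u Ur.
Proof.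
move=> Kc cn0; rewrite /beta_r; apply: (ub_le_sup beta_ub).
exists (Ur *m c); last exact: val_Ur.
split; last exact: Ur_nz.
by exists 0, c; split; [exact: Kscal0 | split=> //; rewrite scale0r add0r].
Qed.

Lemma KN : Kmx Kreal (hadj M *m M).
Proof. by apply: Kmx_mul; [apply: Kmx_hadj|]; exact: KM. Qed.

Lemma hadjN_herm : hadj (hadj M *m M) = hadj M *m M.
Proof. by rewrite hadjM hadjK. Qed.

Lemma eig_real_vec (lam : R) (v : 'cV[C]_r) : v != 0 ->
  (hadj M *m M) *m v = lam%:C *: v ->
  exists c : 'cV[C]_r, Kmx Kreal c /\ c != 0 /\ (hadj M *m M) *m c = lam%:C *: c.
Proof.
move=> vn0 hv; have [Kr|Kr] := boolP Kreal.
  have NR : forall i j, (hadj M *m M) i j \is Num.real by move/KmxP: KN => h; exact: h Kr.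
  have [w [wR [wn0 hw]]] := real_eig NR vn0 hv.
  by exists w; split => //; apply/KmxP => _; exact: wR.
by exists v; split => //; exact: Kmx_false.
Qed.

Lemma sv_char s : singvals M s ->
  exists c : 'cV[C]_r, Kmx Kreal c /\ c != 0 /\ vn (M *m c) = s * vn c.
Proof.
move=> [s0 /eig_col [v vn0 hv]].
have e : conjc ((s ^+ 2)%:C) = (s ^+ 2)%:C by rewrite conjc_real.
rewrite hadjN_herm e in hv.
have [c [Kc [cn0 hc]]] := eig_real_vec vn0 hv.
exists c; do 2 split => //.
have := eig_norm hc; rewrite !nnE -rmorphM => /complexI /eqP.
by rewrite -exprMn eqrXn2 // ?mulr_ge0 ?vn_ge0 // => /eqP.
Qed.

Lemma sv_nonempty : exists s, singvals M s.
Proof.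
have [lam hl] := eigenvalue_closed (hadj M *m M) hr.
have [v vn0 hv] := eig_col hl; rewrite hadjN_herm in hv.
have e := eig_norm hv.
have mu0 : 0 <= conjc lam.
  have nnv : 0 < nn v by rewrite lt_def nn_eq0 vn0 nn_ge0.
  have -> : conjc lam = nn (M *m v) / nn v by rewrite e mulfK // gt_eqF.
  by rewrite divr_ge0 ?nn_ge0 // ltW.
have hRe : 0 <= complex.Re (conjc lam) by move: mu0; rewrite lecE /= => /andP[].
exists (Num.sqrt (complex.Re (conjc lam))); split; first exact: sqrtr_ge0.
have h : conjc (conjc lam) = conjc lam := conj_Creal (ger0_real mu0).
rewrite conjcK in h.
have E : ((Num.sqrt (complex.Re (conjc lam))) ^+ 2)%:C = lam.
  rewrite sqr_sqrtr; last exact: hRe.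
  rewrite [RHS]h; symmetry; exact: cplx_ge0E mu0.
rewrite E; exact: hl.
Qed.

Lemma sv_zero : M \notin unitmx -> singvals M 0.
Proof.
move=> Mn; split; first by [].
have -> : (((0 : R) ^+ 2)%:C) = 0 by rewrite expr2 mul0r.
rewrite eigenvalue_root_char rootE horner_coef0 char_poly_det det_mulmx.
have -> : \det M = 0 by move: Mn; rewrite unitmxE unitfE negbK => /eqP.
by rewrite !mulr0.
Qed.

Lemma alpha_pos : M \in unitmx -> 0 < alpha_r Kreal RU A Ur.
Proof.
move=> Mu; have [K [Kp hK]] := opbound (invmx M).
apply: (@lt_le_trans _ _ K^-1); first by rewrite invr_gt0.
apply: alpha_ge.
  by have [s hs] := sv_nonempty; have [c [Kc [cn0 _]]] := sv_char hs; exists c.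
move=> c Kc cn0; have vc : 0 < vn c by rewrite lt_def vn_eq0 cn0 vn_ge0.
rewrite ler_pdivlMr //.
have := hK (M *m c); rewrite mulKmx // => h.
by rewrite -(ler_pM2l Kp) mulrA mulfV ?gt_eqF // mul1r.
Qed.

Lemma main_sec : cond_number M <= beta_r Kreal RU A u Ur / alpha_r Kreal RU A Ur.
Proof.
set S := singvals M; rewrite /cond_number -/S.
set al := alpha_r Kreal RU A Ur; set be := beta_r Kreal RU A u Ur.
have [s0 Ss0] := sv_nonempty.
have hs s : S s -> [/\ al <= s, s <= be & 0 <= s].
  move=> Ss; have [c [Kc [cn0 hc]]] := sv_char Ss.
  have vc : 0 < vn c by rewrite lt_def vn_eq0 cn0 vn_ge0.
  have e : vn (M *m c) / vn c = s by rewrite hc mulfK // gt_eqF.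
  split; [rewrite -e; exact: alpha_le | rewrite -e; exact: beta_ge | exact: Ss.1].
have hubS : has_ubound S by exists be => x /hs [].
have hlbS : has_lbound S by exists 0 => x /hs [].
have [_ bs0 s00] := hs s0 Ss0.
have be0 : 0 <= be := le_trans s00 bs0.
have supS0 : 0 <= sup S := le_trans s00 (ub_le_sup hubS Ss0).
have nS : S !=set0 by exists s0.
have [Mu|Mn] := boolP (M \in unitmx).
  have ap := alpha_pos Mu.
  have infS : al <= inf S by apply: lb_le_inf nS _ => x /hs [].
  have supS : sup S <= be by apply: ge_sup nS _ => x /hs [].
  have ip : 0 < inf S := lt_le_trans ap infS.
  apply: (@le_trans _ _ (sup S / al)).
    by rewrite ler_wpM2l // lef_pV2 ?posrE.
  by rewrite ler_wpM2r // invr_ge0 ltW.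
have S0 := sv_zero Mn.
have inf0 : inf S = 0.
  apply/le_anti; rewrite (ge_inf hlbS S0) /=.
  by apply: lb_le_inf nS _ => x /hs [].
by rewrite inf0 invr0 mulr0 divr_ge0 // alpha_ge0.
Qed.

End Main.

Theorem proposition2p2 (R : realType) (Kreal : bool) (n r : nat)
  (RU : 'M[R[i]]_n) (A : 'M[R[i]]_n) (u : 'cV[R[i]]_n) (Ur : 'M[R[i]]_(n, r))
  (hr : (0 < r)%N)
  (hRU_K : Kmx Kreal RU) (hRU_sa : hadj RU = RU)
  (hRU_pd : forall x : 'cV[R[i]]_n, Kmx Kreal x -> x != 0 -> 0 < ipU RU x x)
  (hA_K : Kmx Kreal A) (hu_K : Kmx Kreal u) (hUr_K : Kmx Kreal Ur)
  (hUr_basis : forall c : 'cV[R[i]]_r, Kmx Kreal c -> Ur *m c = 0 -> c = 0)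
  (hUr_orth : hadj Ur *m RU *m Ur = 1%:M) :
  cond_number (hadj Ur *m A *m Ur)
    <= beta_r Kreal RU A u Ur / alpha_r Kreal RU A Ur.
Proof. by apply: main_sec. Qed.
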